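(* Suppose $f$ satisfies the separation property. Let $x\in\widetilde X$ with itinerary $\theta$, $t\geqslant0$, $n\geqslant 1$ and $(i_1,\dots,i_n)\in\{1,\dots,N\}^n$. Then $\theta_t\theta_{t+1}\dots\theta_{t+n-1}=i_1\dots i_n$ if and only if $f^{t+n}(x)\in A_{i_1\dots i_n}$.
   Context: Let $(X,d)$ be a compact metric space, $X_1,\dots,X_N$ ($N\geqslant 2$) non-empty pairwise disjoint open subsets with $X=\bigcup_i\overline{X_i}$, $\Delta:=\{x\in\overline{X_i}\cap\overline{X_j}:i\neq j\}$, and $f:X\to X$ a map such that each $f|_{X_i}$ admits a continuous extension $f_i:\overline{X_i}\to X$. Separation property: each $f_i$ injective and $f_i(\overline{X_i})\cap f_j(\overline{X_j})=\emptyset$ for $i\neq j$. $\widetilde X:=\bigcap_{n\geqslant 0}f^{-n}(X\setminus\Delta)$; the itinerary of $x\in\widetilde X$ is $\theta$ with $\theta_t=i$ iff $f^t(x)\in X_i$. For $A\subset X$ let $F_i(A):=\overline{f(A\cap X_i)}$ and $A_{i_1\dots i_n}:=F_{i_n}\circ\dots\circ F_{i_1}(X)$. *)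

(* Defs.v *)
From HB Require Import structures.
From mathcomp Require Import all_boot all_order all_algebra.
From mathcomp Require Import all_classical all_reals all_analysis.
Set Implicit Arguments. Unset Strict Implicit. Unset Printing Implicit Defensive.
Import Order.TTheory GRing.Theory Num.Theory.
Local Open Scope classical_set_scope.

Section Defs.
Context {T : topologicalType} {N : nat}.
Variables (Xs : 'I_N -> set T) (f : T -> T).

Definition Delta : set T :=
  [set x | exists i j : 'I_N, i != j /\ closure (Xs i) x /\ closure (Xs j) x].

Definition Xtilde : set T := [set x | forall n : nat, ~ Delta (iter n f x)].

Definition is_itinerary (x : T) (theta : nat -> 'I_N) : Prop :=
  forall (t : nat) (i : 'I_N), theta t = i <-> Xs i (iter t f x).

Definition Fmap (i : 'I_N) (A : set T) : set T := closure (f @` (A `&` Xs i)).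

Definition Aword (w : seq 'I_N) : set T := foldl (fun A i => Fmap i A) setT w.

Definition separation (fi : 'I_N -> T -> T) : Prop :=
  (forall i, {in closure (Xs i) &, injective (fi i)}) /\
  (forall i j, i != j -> fi i @` closure (Xs i) `&` fi j @` closure (Xs j) = set0).
End Defs.

(* Main.v *)
Require Import Defs.
From HB Require Import structures.
From mathcomp Require Import all_boot all_order all_algebra.
From mathcomp Require Import all_classical all_reals all_analysis.
Import Order.TTheory GRing.Theory Num.Theory.
Local Open Scope classical_set_scope.

Lemma key_closure (R : realType) (X : metricType R) (C S : set X) (g : X -> X) :
  compact [set: X] -> {within closure C, continuous g} -> S `<=` closure C ->
  closure (g @` S) `<=` g @` closure S.
Proof.
move=> cX gc SC.
have SC' : closure S `<=` closure C.
  by rewrite [X in _ `<=` X](closure_id _).1; [exact: closureS | exact: closed_closure].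
have cS : compact (closure S).
  apply: (subclosed_compact _ cX) => //; exact: closed_closure.
have ci : compact (g @` closure S).
  apply: continuous_compact => //; exact: (continuous_subspaceW SC').
have cl : closed (g @` closure S) by apply: compact_closed => //; exact: metric_hausdorff.
rewrite [X in _ `<=` X](closure_id _).1 //; apply: closureS.
by apply: image_subset; exact: subset_closure.
Qed.

Lemma Aword_closed (X : topologicalType) (N : nat) (Xs : 'I_N -> set X) (f : X -> X) w :
  closed (Aword Xs f w).
Proof.
elim/last_ind: w => [|w i _]; first exact: closedT.
rewrite /Aword foldl_rcons; exact: closed_closure.
Qed.

Theorem corollary1 (R : realType) (X : metricType R) (N : nat)
  (Xs : 'I_N -> set X) (f : X -> X) (fi : 'I_N -> X -> X) :
  (2 <= N)%N ->
  compact [set: X] ->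
  (forall i, open (Xs i)) ->
  (forall i, Xs i !=set0) ->
  (forall i j, i != j -> Xs i `&` Xs j = set0) ->
  \bigcup_(i in [set: 'I_N]) closure (Xs i) = [set: X] ->
  (forall i, {within closure (Xs i), continuous fi i}) ->
  (forall i x, Xs i x -> fi i x = f x) ->
  separation Xs fi ->
  forall (x : X) (theta : nat -> 'I_N), Xtilde Xs f x -> is_itinerary Xs f x theta ->
  forall (t n : nat) (w : n.-tuple 'I_N), (1 <= n)%N ->
    [seq theta (t + k)%N | k <- iota 0 n] = val w <->
    Aword Xs f (val w) (iter (t + n) f x).
Proof.
move=> _ cX _ _ _ _ fic fif [finj fdisj] x theta _ itin t n w _.
suff H: forall w : seq 'I_N, Aword Xs f w (iter (t + size w) f x) <->
  [seq theta (t + k)%N | k <- iota 0 (size w)] = w.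
  by have := H (val w); rewrite size_tuple => H'; split => /H'.
clear w n => w.
elim/last_ind: w => [|w i IH]; first by split.
rewrite size_rcons -addn1 iotaD map_cat /= cats1 ?addn0 addn1 addnS iterS.
rewrite /Aword foldl_rcons -/(Aword Xs f w) /Fmap.
set y := iter (t + size w) f x.
set A := Aword Xs f w.
have Xy : Xs (theta (t + size w)%N) y by apply/itin.
split.
- move=> Hc.
  have sub : f @` (A `&` Xs i) `<=` fi i @` (A `&` Xs i).
    move=> b [z [Az Xz] fz]; rewrite -fz; exists z => //; exact: fif.
  have SC : A `&` Xs i `<=` closure (Xs i) by move=> z [_ /subset_closure].
  have [z Hz fz] := @key_closure _ _ _ _ _ cX (fic i) SC _ (closureS sub Hc).
  have zC : closure (Xs i) z.
    have cc := (closure_id (closure (Xs i))).1 (@closed_closure _ (Xs i)).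
    by have := closureS SC Hz; rewrite -cc.
  have eq_i : theta (t + size w)%N = i.
    apply/eqP; apply/negP => /negP ne.
    have := fdisj _ _ ne; rewrite -subset0 => /(_ (f y)); apply.
    split; first by exists y; [exact: subset_closure | exact: fif].
    by exists z.
  have yz : y = z.
    have yC : closure (Xs i) y by rewrite -eq_i; apply: subset_closure.
    apply: (finj i); [exact: mem_set|exact: mem_set|].
    by rewrite fz -eq_i; exact: fif.
  have Ay : A y.
    have cc := (closure_id A).1 (@Aword_closed _ _ Xs f w).
    rewrite cc yz; apply: (closureS _ Hz); by move=> ? [].
  by rewrite (IH.1 Ay) eq_i.
- move=> /eqP; rewrite eqseq_rcons => /andP [/eqP Hw /eqP Hi].
  apply: subset_closure; exists y => //; split; first exact/IH.
  by rewrite -Hi.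
Qed.
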